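(* Let $k\ge1$ and $q=2^{-1/k}$. The finite source $\mathcal{A}_k=\{(i,j):0\le i,j<k\}$ with weights $w(i,j)=q^{i+j}$ is $4$-uniform, and it has an optimal binary prefix code (tree) $T$ of fringe thickness at most $2$.
   Context: A finite source with weights $p_1\ge p_2\ge\dots\ge p_N>0$, $N\ge 2$, is $\alpha$-uniform ($\alpha\ge1$) if $p_1/p_N\le\alpha$. A prefix code is optimal for a finite weighted source if it minimizes $\sum_i p_i\ell_i$ over all binary prefix codes, $\ell_i$ the codeword lengths. The fringe thickness of a finite tree is the maximum difference between the depths of any two of its leaves. *)

(* Defs.v *)
From Stdlib Require Import Reals List Arith.
Import ListNotations.
Open Scope R_scope.

(* A finite weighted source is a list of weights (symbol n has weight nth n ws 0). *)

Definition alpha_uniform (ws : list R) (alpha : R) : Prop :=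
  1 <= alpha /\
  (forall x, In x ws -> 0 < x) /\
  (forall x y, In x ws -> In y ws -> x <= alpha * y).

Definition is_prefix (u v : list bool) : Prop := exists w, v = u ++ w.

Definition prefix_code (n : nat) (c : list (list bool)) : Prop :=
  length c = n /\
  forall a b, (a < n)%nat -> (b < n)%nat -> a <> b ->
    ~ is_prefix (nth a c []) (nth b c []).

Fixpoint cost (ws : list R) (c : list (list bool)) : R :=
  match ws, c with
  | p :: ws', w :: c' => p * INR (length w) + cost ws' c'
  | _, _ => 0
  end.

Definition optimal_code (ws : list R) (c : list (list bool)) : Prop :=
  prefix_code (length ws) c /\
  forall c', prefix_code (length ws) c' -> cost ws c <= cost ws c'.

(* Fringe thickness of the code tree: the leaves of the tree of a prefix code
   are exactly its codewords, at depth = codeword length; so it is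
   (max codeword length) - (min codeword length). *)
Definition min_list (l : list nat) : nat := fold_right Nat.min (hd 0%nat l) l.
Definition fringe_thickness (c : list (list bool)) : nat :=
  (list_max (map (@length bool) c) - min_list (map (@length bool) c))%nat.

Definition qk (k : nat) : R := Rpower 2 (- / INR k).
Definition source_A (k : nat) : list R :=
  flat_map (fun i => map (fun j => qk k ^ (i + j)) (seq 0 k)) (seq 0 k).

(* Main.v *)
Require Import Defs.
From Stdlib Require Import Reals List Arith.
Open Scope R_scope.

From Stdlib Require Import Reals List Arith Lia Lra Permutation Sorting.Sorted Sorting.Mergesort.
Import ListNotations.
Open Scope nat_scope.

Fixpoint bits (l x : nat) : list bool :=
  match l with 0 => [] | S l' => bits l' (x / 2) ++ [Nat.odd x] end.

Lemma bits_length l x : length (bits l x) = l.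
Proof. revert x; induction l; intros; simpl; [reflexivity|].
  rewrite length_app, IHl; simpl; lia. Qed.

Lemma bits_split a d y : bits (a + d) y = bits a (y / 2^d) ++ bits d y.
Proof.
  revert y; induction d; intros y.
  - rewrite Nat.add_0_r, Nat.pow_0_r, Nat.div_1_r. simpl. rewrite app_nil_r; reflexivity.
  - rewrite Nat.add_succ_r. cbn [bits]. rewrite IHd, <- app_assoc, Nat.Div0.div_div, Nat.pow_succ_r'.
    reflexivity.
Qed.

Lemma bits_inj l x y : bits l x = bits l y -> x < 2^l -> y < 2^l -> x = y.
Proof.
  revert x y; induction l; intros x y H Hx Hy; cbn [bits] in *.
  - rewrite Nat.pow_0_r in *; lia.
  - rewrite Nat.pow_succ_r' in Hx, Hy. apply app_inj_tail in H as [H1 H2].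
    assert (x/2 = y/2).
    { apply IHl; auto; apply Nat.Div0.div_lt_upper_bound; lia. }
    rewrite (Nat.div2_odd x), (Nat.div2_odd y), !Nat.div2_div, H, H2. reflexivity.
Qed.

Lemma app_prefix_eq {A} (u1 v1 u2 v2 : list A) :
  u1 ++ v1 = u2 ++ v2 -> length u1 = length u2 -> u1 = u2.
Proof.
  revert u2; induction u1; intros [|b u2] H Hl; simpl in *; try lia; auto.
  inversion H; subst. f_equal. apply (IHu1 u2); auto.
Qed.

Lemma bits_not_prefix l x l2 y :
  l <= l2 -> x < 2^l -> y < 2^l2 -> (x+1) * 2^(l2-l) <= y ->
  ~ is_prefix (bits l x) (bits l2 y) /\ ~ is_prefix (bits l2 y) (bits l x).
Proof.
  intros Hl Hx Hy Hxy. split.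
  - intros [z Hz].
    replace l2 with (l + (l2 - l)) in Hz by lia.
    rewrite bits_split in Hz.
    apply app_prefix_eq in Hz; [|rewrite !bits_length; auto].
    apply bits_inj in Hz; auto.
    + assert (x + 1 <= y / 2^(l2-l)).
      { apply Nat.div_le_lower_bound; [apply Nat.pow_nonzero; lia| lia]. }
      lia.
    + apply Nat.Div0.div_lt_upper_bound. rewrite <- Nat.pow_add_r.
      replace (l2 - l + l) with l2 by lia. auto.
  - intros [z Hz].
    assert (Hlen := f_equal (@length bool) Hz).
    rewrite length_app, !bits_length in Hlen.
    assert (l2 = l) by lia. subst l2.
    destruct z; [|simpl in Hlen; lia]. rewrite app_nil_r in Hz.
    apply bits_inj in Hz; auto. rewrite Nat.sub_diag in Hxy. simpl in Hxy. lia.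
Qed.

Fixpoint canon (p a : nat) (ls : list nat) : list (list bool) :=
  match ls with
  | [] => []
  | l :: ls' => bits l (a * 2^(l-p)) :: canon l (a * 2^(l-p) + 1) ls'
  end.

Lemma canon_length p a ls : map (@length bool) (canon p a ls) = ls.
Proof. revert p a; induction ls; intros; simpl; auto. rewrite bits_length, IHls; auto. Qed.

Definition S2 (M : nat) (ls : list nat) := list_sum (map (fun l => 2^(M-l)) ls).

Lemma canon_inv M ls : forall p a,
  StronglySorted le ls -> Forall (fun l => p <= l <= M) ls ->
  a * 2^(M-p) + S2 M ls <= 2^M ->
  forall w, In w (canon p a ls) ->
  exists l2 b, w = bits l2 b /\ p <= l2 /\ a * 2^(l2-p) <= b /\ b < 2^l2.
Proof.
  induction ls as [|l ls IH]; intros p a Hs Hf Hk w Hw; simpl in Hw; [contradiction|].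
  inversion Hs; subst. inversion Hf; subst.
  assert (E1 : 2^(l-p) * 2^(M-l) = 2^(M-p)) by (rewrite <- Nat.pow_add_r; f_equal; lia).
  assert (E2 : 2^(M-l) * 2^l = 2^M) by (rewrite <- Nat.pow_add_r; f_equal; lia).
  unfold S2 in Hk; simpl in Hk. fold (S2 M ls) in Hk.
  destruct Hw as [Hw|Hw].
  - subst w. exists l, (a * 2^(l-p)). repeat split; try lia.
    assert ((a * 2^(l-p) + 1) * 2^(M-l) <= 2^M) by nia.
    assert (0 < 2^(M-l)) by (apply Nat.neq_0_lt_0, Nat.pow_nonzero; lia).
    nia.
  - assert (HF : Forall (fun x => l <= x <= M) ls).
    { rewrite Forall_forall in *. intros x Hx. specialize (H2 x Hx). specialize (H4 x Hx). lia. }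
    destruct (IH l (a * 2^(l-p) + 1) H1 HF ltac:(nia) w Hw)
      as [l2 [b [-> [Hl2 [Hb1 Hb2]]]]].
    exists l2, b. repeat split; try lia.
    assert (2^(l-p) * 2^(l2-l) = 2^(l2-p)) by (rewrite <- Nat.pow_add_r; f_equal; lia).
    nia.
Qed.

Definition NP (u v : list bool) := ~ is_prefix u v /\ ~ is_prefix v u.

Lemma canon_pairs M ls : forall p a,
  StronglySorted le ls -> Forall (fun l => p <= l <= M) ls ->
  a * 2^(M-p) + S2 M ls <= 2^M ->
  ForallOrdPairs NP (canon p a ls).
Proof.
  induction ls as [|l ls IH]; intros p a Hs Hf Hk; simpl; [constructor|].
  inversion Hs; subst. inversion Hf; subst.
  assert (E1 : 2^(l-p) * 2^(M-l) = 2^(M-p)) by (rewrite <- Nat.pow_add_r; f_equal; lia).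
  assert (E2 : 2^(M-l) * 2^l = 2^M) by (rewrite <- Nat.pow_add_r; f_equal; lia).
  unfold S2 in Hk; simpl in Hk. fold (S2 M ls) in Hk.
  assert (HF : Forall (fun x => l <= x <= M) ls).
  { rewrite Forall_forall in *. intros x Hx. specialize (H2 x Hx). specialize (H4 x Hx). lia. }
  assert (Hk' : (a * 2 ^ (l - p) + 1) * 2 ^ (M - l) + S2 M ls <= 2 ^ M) by nia.
  constructor.
  - apply Forall_forall. intros w Hw.
    destruct (canon_inv M ls l _ H1 HF Hk' w Hw) as [l2 [b [-> [Hl2 [Hb1 Hb2]]]]].
    assert (0 < 2^(M-l)) by (apply Nat.neq_0_lt_0, Nat.pow_nonzero; lia).
    apply bits_not_prefix; auto. nia.
  - apply IH; auto.
Qed.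

Lemma leb_le' x y : NatOrder.leb x y = true <-> x <= y.
Proof. revert y; induction x; intros [|y]; simpl; split; intros; try lia; auto.
  - apply IHx in H; lia.
  - apply IHx; lia. Qed.

Lemma SS_conv l : StronglySorted (fun x y => is_true (NatOrder.leb x y)) l -> StronglySorted le l.
Proof.
  induction 1; constructor; auto.
  eapply Forall_impl; [|exact H0]. intros x Hx. apply leb_le'; exact Hx.
Qed.

Lemma perm_sum l1 l2 : Permutation l1 l2 -> list_sum l1 = list_sum l2.
Proof. induction 1; simpl; lia. Qed.

Lemma perm_transport {A B} (f : A -> B) l1 l2 : Permutation l1 l2 ->
  forall c2, map f c2 = l2 -> exists c1, map f c1 = l1 /\ Permutation c1 c2.
Proof.
  induction 1; intros c2 Hc2.
  - exists []; split; auto. destruct c2; try discriminate; auto.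
  - destruct c2 as [|a c2]; try discriminate. simpl in Hc2; inversion Hc2; subst.
    destruct (IHPermutation c2 eq_refl) as [c1 [H1 H2]].
    exists (a :: c1); simpl; rewrite H1; split; auto.
  - destruct c2 as [|a [|b c2]]; try discriminate. simpl in Hc2; inversion Hc2; subst.
    exists (b :: a :: c2); split; auto. constructor.
  - destruct (IHPermutation2 c2 Hc2) as [c1 [H1 H2]].
    destruct (IHPermutation1 c1 H1) as [c0 [H3 H4]].
    exists c0; split; auto. eapply perm_trans; eauto.
Qed.

Definition PF (c : list (list bool)) :=
  NoDup c /\ forall u v, In u c -> In v c -> u <> v -> ~ is_prefix u v.

Lemma prefix_refl u : is_prefix u u.
Proof. exists []; rewrite app_nil_r; auto. Qed.

Lemma FOP_PF c : ForallOrdPairs NP c -> PF c.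
Proof.
  intros H. split.
  - induction H; constructor; auto. intros Hin.
    rewrite Forall_forall in H. destruct (H a Hin) as [H1 _]. apply H1, prefix_refl.
  - intros u v Hu Hv Huv. destruct (ForallOrdPairs_In H u v Hu Hv) as [E|[[E _]|[_ E]]]; tauto.
Qed.

Lemma PF_perm c1 c2 : Permutation c1 c2 -> PF c2 -> PF c1.
Proof.
  intros Hp [H1 H2]. split.
  - eapply Permutation_NoDup; [apply Permutation_sym|]; eauto.
  - intros u v Hu Hv. apply H2; eapply Permutation_in; eauto.
Qed.

Lemma kraft_converse M ls : Forall (fun l => l <= M) ls -> S2 M ls <= 2^M ->
  exists c, map (@length bool) c = ls /\ PF c.
Proof.
  intros Hf Hk.
  set (ls' := NatSort.sort ls).
  assert (Hp : Permutation ls ls') by apply NatSort.Permuted_sort.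
  assert (Hs : StronglySorted le ls').
  { apply SS_conv, NatSort.StronglySorted_sort. intros x y z Hxy Hyz.
    apply leb_le' in Hxy, Hyz. apply leb_le'. lia. }
  assert (Hf' : Forall (fun l => 0 <= l <= M) ls').
  { rewrite Forall_forall in *. intros x Hx. apply (Permutation_in _ (Permutation_sym Hp)) in Hx.
    specialize (Hf x Hx). lia. }
  assert (Hk' : 0 * 2^(M-0) + S2 M ls' <= 2^M).
  { unfold S2 in *. rewrite <- (perm_sum _ _ (Permutation_map _ Hp)). lia. }
  destruct (perm_transport (@length bool) ls ls' Hp (canon 0 0 ls') (canon_length 0 0 ls'))
    as [c [Hc1 Hc2]].
  exists c; split; auto.
  eapply PF_perm; eauto. apply FOP_PF. eapply canon_pairs; eauto.
Qed.

From Stdlib Require Import Reals List Arith Lia Lra Permutation.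
Import ListNotations.
Open Scope R_scope.

Definition sumR (l : list R) := fold_right Rplus 0 l.
Definition K (c : list (list bool)) := sumR (map (fun w => (/2)^(length w)) c).

Lemma K_nil_all c : (forall w, In w c -> w = []) -> NoDup c -> K c <= 1.
Proof.
  intros H Hn. destruct c as [|x [|y c]]; unfold K; simpl.
  - lra.
  - rewrite (H x (or_introl eq_refl)). simpl. lra.
  - exfalso. inversion Hn; subst. apply H2.
    rewrite (H x (or_introl eq_refl)), (H y (or_intror (or_introl eq_refl))). left; auto.
Qed.

Definition hb (b : bool) (w : list bool) : bool :=
  match w with x :: _ => Bool.eqb x b | [] => false end.

Definition sub (b : bool) c := map (@tl bool) (filter (hb b) c).

Lemma K_split c : (forall w, In w c -> w <> []) ->
  K c = /2 * K (sub false c) + /2 * K (sub true c).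
Proof.
  induction c as [|w c IH]; intros H; unfold K, sub in *; simpl; [lra|].
  rewrite IH by (intros w0 Hw0; apply H; simpl; auto).
  destruct w as [|x w]; [exfalso; apply (H [] (or_introl eq_refl)); reflexivity|].
  destruct x; simpl; lra.
Qed.

Lemma sub_PF b c : PF c -> PF (sub b c).
Proof.
  intros [Hn Hp]. split.
  - apply NoDup_map_NoDup_ForallPairs; [|apply NoDup_filter; auto].
    intros x y Hx Hy E. apply filter_In in Hx as [_ Hx]. apply filter_In in Hy as [_ Hy].
    destruct x as [|x1 x]; destruct y as [|y1 y]; simpl in *; try discriminate.
    apply Bool.eqb_prop in Hx, Hy. subst; auto.
  - intros u v Hu Hv Huv [z Hz]. unfold sub in *.
    apply in_map_iff in Hu as [u0 [Hu0 Hu]]. apply in_map_iff in Hv as [v0 [Hv0 Hv]].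
    apply filter_In in Hu as [Hu Hu']. apply filter_In in Hv as [Hv Hv'].
    destruct u0 as [|x u0]; destruct v0 as [|y v0]; simpl in *; try discriminate.
    apply Bool.eqb_prop in Hu', Hv'. subst x y u v.
    apply (Hp (b :: u0) (b :: v0) Hu Hv).
    + intros E; inversion E; auto.
    + exists z. simpl. f_equal; auto.
Qed.

Lemma kraft M : forall c, PF c -> (forall w, In w c -> (length w <= M)%nat) -> K c <= 1.
Proof.
  induction M; intros c Hpf Hl.
  - apply K_nil_all; [|apply Hpf]. intros w Hw. specialize (Hl w Hw).
    destruct w; simpl in Hl; auto; lia.
  - destruct (in_dec (list_eq_dec Bool.bool_dec) [] c) as [Hin|Hnin].
    + apply K_nil_all; [|apply Hpf]. intros w Hw.
      destruct (list_eq_dec Bool.bool_dec w []) as [E|E]; auto.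
      exfalso. apply (proj2 Hpf [] w Hin Hw (not_eq_sym E)). exists w; auto.
    + rewrite K_split by (intros w Hw E; subst; auto).
      assert (forall b, K (sub b c) <= 1).
      { intros b. apply IHM; [apply sub_PF; auto|].
        intros w Hw. unfold sub in Hw. apply in_map_iff in Hw as [w0 [<- Hw0]].
        apply filter_In in Hw0 as [Hw0 _]. specialize (Hl w0 Hw0).
        destruct w0; simpl in *; lia. }
      pose proof (H false). pose proof (H true). lra.
Qed.

From Stdlib Require Import Reals List Arith Lia Lra Permutation.
Import ListNotations.
Open Scope R_scope.

Lemma half_mono a b : (a <= b)%nat -> (/2)^b <= (/2)^a.
Proof.
  intros H. replace b with (a + (b - a))%nat by lia. rewrite pow_add.
  assert (0 < (/2)^a) by (apply pow_lt; lra).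
  assert ((/2)^(b-a) <= 1).
  { induction (b - a)%nat; simpl; [lra|]. assert (0 <= (/2)^n) by (apply pow_le; lra). nra. }
  nra.
Qed.

Lemma half_step (p lam : R) l : p * INR (S l) + lam * (/2)^(S l) - (p * INR l + lam * (/2)^l) = p - lam * (/2)^(S l).
Proof. rewrite S_INR. simpl. lra. Qed.

Lemma item_ineq (p lam : R) (ls : nat) : 0 < lam -> lam * (/2)^(ls+1) <= p -> p <= lam * (/2)^ls ->
  forall l, p * INR ls + lam * (/2)^ls <= p * INR l + lam * (/2)^l.
Proof.
  intros Hlam H1 H2.
  assert (up : forall d, p * INR ls + lam * (/2)^ls <= p * INR (ls + d) + lam * (/2)^(ls + d)).
  { induction d; [rewrite Nat.add_0_r; lra|].
    rewrite Nat.add_succ_r. pose proof (half_step p lam (ls + d)).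
    assert ((/2)^(S (ls + d)) <= (/2)^(ls+1)) by (apply half_mono; lia).
    assert (lam * (/2)^(S (ls + d)) <= lam * (/2)^(ls+1)) by (apply Rmult_le_compat_l; lra).
    lra. }
  assert (down : forall d l, (l + d = ls)%nat -> p * INR ls + lam * (/2)^ls <= p * INR l + lam * (/2)^l).
  { induction d; intros l Hl; [subst; rewrite Nat.add_0_r; lra|].
    specialize (IHd (S l) ltac:(lia)). pose proof (half_step p lam l).
    assert ((/2)^ls <= (/2)^(S l)) by (apply half_mono; lia).
    assert (lam * (/2)^ls <= lam * (/2)^(S l)) by (apply Rmult_le_compat_l; lra).
    lra. }
  intros l. destruct (Nat.le_ge_cases ls l).
  - replace l with (ls + (l - ls))%nat by lia. apply up.
  - apply (down (ls - l)%nat). lia.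
Qed.

Fixpoint costL (ws : list R) (ls : list nat) : R :=
  match ws, ls with
  | p :: ws', l :: ls' => p * INR l + costL ws' ls'
  | _, _ => 0
  end.

Lemma cost_costL ws c : cost ws c = costL ws (map (@length bool) c).
Proof. revert c; induction ws; intros [|w c]; simpl; auto. rewrite IHws; auto. Qed.

Definition KL (ls : list nat) := sumR (map (fun l => (/2)^l) ls).

Lemma K_KL c : K c = KL (map (@length bool) c).
Proof. unfold K, KL. rewrite map_map. reflexivity. Qed.

Lemma lp_bound lam ws ls : 0 < lam ->
  Forall2 (fun p l => lam * (/2)^(l+1) <= p <= lam * (/2)^l) ws ls ->
  forall ls', length ls' = length ws ->
  costL ws ls + lam * KL ls <= costL ws ls' + lam * KL ls'.
Proof.
  intros Hlam HF. induction HF as [|x y xs ys H HF IH]; intros L0 Hlen.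
  - destruct L0; simpl in *; [unfold KL; simpl; lra| discriminate].
  - destruct L0 as [|z L1]; simpl in Hlen; [discriminate|].
    specialize (IH L1 ltac:(lia)). unfold KL in *; simpl.
    pose proof (item_ineq x lam y Hlam (proj1 H) (proj2 H) z). lra.
Qed.

Lemma pc_PF n c : prefix_code n c -> PF c.
Proof.
  intros [Hl Hp]. split.
  - apply (NoDup_nth c []). intros i j Hi Hj E.
    destruct (Nat.eq_dec i j); auto. exfalso.
    apply (Hp i j ltac:(lia) ltac:(lia) n0). rewrite E. apply prefix_refl.
  - intros u v Hu Hv Huv.
    apply (In_nth c u []) in Hu as [i [Hi <-]]. apply (In_nth c v []) in Hv as [j [Hj <-]].
    apply Hp; try lia. intros ->. auto.
Qed.

Lemma PF_pc c : PF c -> prefix_code (length c) c.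
Proof.
  intros [Hn Hp]. split; auto. intros a b Ha Hb Hab.
  apply Hp; try apply nth_In; auto.
  intros E. apply Hab. eapply NoDup_nth; eauto.
Qed.

From Stdlib Require Import List Arith Lia Bool.
Import ListNotations.
Open Scope nat_scope.

Definition dd (k t h g i j : nat) : nat :=
  let s := i + j in
  if s <? t then 0 else if s =? t then (if i <? h then 0 else 1)
  else if s <? k + t then 1 else if s =? k + t then (if i <? t + 1 + g then 1 else 2) else 2.

Definition dsum k (f : nat -> nat -> nat) :=
  list_sum (map (fun i => list_sum (map (f i) (seq 0 k))) (seq 0 k)).

Definition W k t h g := dsum k (fun i j => 2^(2 - dd k t h g i j)).

Ltac cmp := repeat (match goal with
  | |- context[?a <? ?b] => destruct (Nat.ltb_spec a b)
  | |- context[?a =? ?b] => destruct (Nat.eqb_spec a b)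
  end; simpl).

Lemma sum_ext {A} (f g : A -> nat) l : (forall x, In x l -> f x = g x) ->
  list_sum (map f l) = list_sum (map g l).
Proof. intros H; f_equal; apply map_ext_in; auto. Qed.

Lemma sum_plus {A} (f g : A -> nat) l :
  list_sum (map (fun x => f x + g x) l) = list_sum (map f l) + list_sum (map g l).
Proof. induction l; simpl; lia. Qed.

Lemma sum_scale {A} (f : A -> nat) c l :
  list_sum (map (fun x => c * f x) l) = c * list_sum (map f l).
Proof. induction l; simpl; lia. Qed.

Lemma dsum_ext k f g : (forall i j, i < k -> j < k -> f i j = g i j) -> dsum k f = dsum k g.
Proof.
  intros H. unfold dsum. apply sum_ext. intros i Hi. apply in_seq in Hi.
  apply sum_ext. intros j Hj. apply in_seq in Hj. apply H; lia.
Qed.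

Lemma dsum_plus k f g : dsum k (fun i j => f i j + g i j) = dsum k f + dsum k g.
Proof.
  unfold dsum. rewrite <- sum_plus. apply sum_ext. intros. apply sum_plus.
Qed.

Lemma dsum_scale k f c : dsum k (fun i j => c * f i j) = c * dsum k f.
Proof.
  unfold dsum. rewrite <- sum_scale. apply sum_ext. intros. apply sum_scale.
Qed.

Lemma ind_sum k j0 : list_sum (map (fun j => if j =? j0 then 1 else 0) (seq 0 k)) = if j0 <? k then 1 else 0.
Proof.
  induction k; [reflexivity|].
  rewrite seq_S, map_app, list_sum_app, IHk. simpl. cmp; lia.
Qed.

Lemma dsum_point k i0 j0 : i0 < k -> j0 < k ->
  dsum k (fun i j => if (i =? i0) && (j =? j0) then 1 else 0) = 1.
Proof.
  intros Hi Hj. unfold dsum.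
  rewrite (sum_ext _ (fun i => if i =? i0 then 1 else 0)).
  - rewrite ind_sum. cmp; lia.
  - intros i _. destruct (Nat.eqb_spec i i0); simpl.
    + rewrite ind_sum. cmp; lia.
    + clear. induction (seq 0 k); simpl; auto.
Qed.

Lemma W_h k t h g : t < k -> h <= t -> W k t (S h) g = W k t h g + 2.
Proof.
  intros Ht Hh. unfold W.
  rewrite (dsum_ext k _ (fun i j => 2^(2 - dd k t h g i j) + 2 * (if (i =? h) && (j =? t - h) then 1 else 0))).
  - rewrite dsum_plus, dsum_scale, dsum_point by lia. lia.
  - intros i j Hi Hj. unfold dd. cmp; lia.
Qed.

Lemma W_g k t h g : t + 1 + g < k -> W k t h (S g) = W k t h g + 1.
Proof.
  intros Hg. unfold W.
  rewrite (dsum_ext k _ (fun i j => 2^(2 - dd k t h g i j) + 1 * (if (i =? t + 1 + g) && (j =? k - 1 - g) then 1 else 0))).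
  - rewrite dsum_plus, dsum_scale, dsum_point by lia. lia.
  - intros i j Hi Hj. unfold dd. cmp; lia.
Qed.

Lemma W_b k t : t + 1 < k -> W k t (t+1) (k-1-t) = W k (t+1) 0 0.
Proof.
  intros H. unfold W. apply dsum_ext. intros i j Hi Hj. unfold dd. cmp; lia.
Qed.

Lemma W_c k : 1 <= k -> W k (k-1) k 0 = 2 * W k 0 0 0.
Proof.
  intros H. unfold W. rewrite <- dsum_scale. apply dsum_ext. intros i j Hi Hj. unfold dd. cmp; lia.
Qed.

Lemma W_0 k : 1 <= k -> 2 <= W k 0 0 0.
Proof.
  intros H. unfold W, dsum. destruct k; [lia|]. simpl seq. cbn [map list_sum fold_right].
  unfold dd. simpl. lia.
Qed.

Lemma dd_le k t h g i j : dd k t h g i j <= 2.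
Proof. unfold dd. cmp; lia. Qed.

Lemma W_hg k t h g : t < k -> h <= t + 1 -> t + 1 + g <= k -> W k t h g = W k t 0 0 + 2 * h + g.
Proof.
  intros Ht Hh Hg. induction g.
  - induction h; [lia|]. rewrite W_h by lia. rewrite IHh by lia. lia.
  - rewrite W_g by lia. rewrite IHg by lia. lia.
Qed.

Lemma find_t k P : 1 <= k -> W k 0 0 0 <= P -> P <= 2 * W k 0 0 0 ->
  exists t, t < k /\ W k t 0 0 <= P /\ P <= W k t 0 0 + 2 * (t+1) + (k-1-t).
Proof.
  intros Hk H1 H2.
  assert (forall d n, n + d = k - 1 -> W k n 0 0 <= P ->
     exists t, t < k /\ W k t 0 0 <= P /\ P <= W k t 0 0 + 2 * (t+1) + (k-1-t)).
  { induction d; intros n Hn Hw.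
    - exists n. split; [lia|split; auto].
      assert (n = k - 1) by lia. subst n.
      pose proof (W_hg k (k-1) k 0 ltac:(lia) ltac:(lia) ltac:(lia)). rewrite W_c in H by lia. lia.
    - destruct (Nat.le_gt_cases P (W k n 0 0 + 2 * (n + 1) + (k - 1 - n))).
      + exists n; repeat split; auto; lia.
      + apply (IHd (S n)); [lia|].
        replace (S n) with (n + 1) by lia. rewrite <- W_b by lia. rewrite W_hg by lia. lia. }
  apply (H (k-1) 0); auto.
Qed.

Lemma exists_params k : 1 <= k -> exists t h g L, t < k /\ h <= t + 1 /\ t + 1 + g <= k /\
  W k t h g = 2^(L+2).
Proof.
  intros Hk. set (A := W k 0 0 0). assert (HA : 2 <= A) by (apply W_0; auto).
  set (lg := Nat.log2 A).
  destruct (Nat.log2_spec A ltac:(lia)) as [Hs1 Hs2]. fold lg in Hs1, Hs2.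
  assert (Hlg : 1 <= lg).
  { destruct lg; [simpl in Hs2; lia|lia]. }
  set (P := 2^(S lg)).
  assert (HP : P = 2 * 2^lg) by (unfold P; rewrite Nat.pow_succ_r'; auto).
  destruct (find_t k P Hk ltac:(fold A; lia) ltac:(fold A; lia)) as [t [Ht [H1 H2]]].
  set (d := P - W k t 0 0).
  destruct (Nat.Even_or_Odd d) as [[m Hm]|[m Hm]].
  - destruct (Nat.le_gt_cases m (t+1)).
    + exists t, m, 0, (lg - 1). repeat split; try lia.
      rewrite W_hg by lia. replace (lg - 1 + 2) with (S lg) by lia. fold P. lia.
    + exists t, (t+1), (2*m - 2*(t+1)), (lg - 1). repeat split; try lia.
      rewrite W_hg by lia. replace (lg - 1 + 2) with (S lg) by lia. fold P. lia.
  - destruct (Nat.eq_dec t (k-1)).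
    + exfalso. subst t.
      assert (E : W k (k-1) 0 0 + 2 * k = 2 * A).
      { unfold A. rewrite <- W_c by lia. rewrite (W_hg k (k-1) k 0) by lia. lia. }
      lia.
    + destruct (Nat.le_gt_cases m (t+1)).
      * exists t, m, 1, (lg - 1). repeat split; try lia.
        rewrite W_hg by lia. replace (lg - 1 + 2) with (S lg) by lia. fold P. lia.
      * exists t, (t+1), (2*m + 1 - 2*(t+1)), (lg - 1). repeat split; try lia.
        rewrite W_hg by lia. replace (lg - 1 + 2) with (S lg) by lia. fold P. lia.
Qed.

From Stdlib Require Import Reals List Arith Lia Lra Permutation.
Import ListNotations.
Open Scope R_scope.


Lemma q_pos (k : nat) : 0 < qk k.
Proof. unfold qk, Rpower. apply exp_pos. Qed.

Lemma q_k (k : nat) (hk : (1 <= k)%nat) : qk k ^ k = /2.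
Proof.
  rewrite <- Rpower_pow by apply (q_pos k). unfold qk. rewrite Rpower_mult.
  replace (- / INR k * INR k) with (-(1)).
  - rewrite Rpower_Ropp, Rpower_1; lra.
  - assert (0 < INR k) by (apply lt_0_INR; lia). field. lra.
Qed.

Lemma q_le1 (k : nat) (hk : (1 <= k)%nat) : qk k <= 1.
Proof.
  destruct (Rle_lt_dec (qk k) 1); auto.
  pose proof (pow_R1_Rle (qk k) k ltac:(lra)). rewrite (q_k k hk) in H. lra.
Qed.

Lemma q_mono (k : nat) (hk : (1 <= k)%nat) a b : (a <= b)%nat -> qk k ^ b <= qk k ^ a.
Proof.
  intros H. replace b with (a + (b - a))%nat by lia. rewrite pow_add.
  assert (0 < qk k ^ a) by (apply pow_lt, q_pos).
  assert (qk k ^ (b-a) <= 1).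
  { pose proof (q_pos k). pose proof (q_le1 k hk). induction (b - a)%nat; simpl; [lra|].
    assert (0 <= qk k ^ n) by (apply pow_le; lra). nra. }
  nra.
Qed.

Lemma q_dk (k : nat) (hk : (1 <= k)%nat) d : qk k ^ (k * d) = (/2)^d.
Proof. rewrite pow_mult, (q_k k hk). auto. Qed.

Lemma window (k : nat) (hk : (1 <= k)%nat) s t d L : (s <= t + d * k)%nat -> (t + d * k <= s + k)%nat ->
  let lam := qk k ^ t * 2^(L+1) in
  lam * (/2)^(L + d + 1) <= qk k ^ s <= lam * (/2)^(L + d).
Proof.
  intros H1 H2 lam.
  assert (E : 2^(L+1) * (/2)^(L+1) = 1).
  { rewrite <- Rpow_mult_distr. replace (2 * /2) with 1 by lra. apply pow1. }
  assert (E2 : qk k ^ t * (/2)^d = qk k ^ (t + d * k)).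
  { rewrite pow_add, Nat.mul_comm, (q_dk k hk). auto. }
  split.
  - replace (L + d + 1)%nat with ((L+1) + d)%nat by lia. rewrite pow_add.
    unfold lam. replace (qk k ^ t * 2 ^ (L + 1) * ((/ 2) ^ (L + 1) * (/ 2) ^ d))
      with (qk k ^ t * (/2)^d * (2 ^ (L + 1) * (/ 2) ^ (L + 1))) by ring.
    rewrite E, E2, Rmult_1_r. apply (q_mono k hk). lia.
  - assert (E3 : 2^(L+1) * (/2)^(L + d) = 2 * (/2)^d).
    { rewrite !pow_add, pow_1.
      replace (2 ^ L * 2 * ((/ 2) ^ L * (/ 2) ^ d)) with (2 * (/2)^d * (2^L * (/2)^L)) by ring.
      rewrite <- Rpow_mult_distr. replace (2 * /2) with 1 by lra. rewrite pow1. ring. }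
    unfold lam. rewrite Rmult_assoc, E3.
    replace (qk k ^ t * (2 * (/ 2) ^ d)) with (2 * (qk k ^ t * (/2)^d)) by ring. rewrite E2.
    assert (qk k ^ (s + k) <= qk k ^ (t + d * k)) by (apply (q_mono k hk); lia).
    rewrite pow_add, (q_k k hk) in H. lra.
Qed.

From Stdlib Require Import Reals List Arith Lia Lra Permutation.
Import ListNotations.
Open Scope R_scope.

Lemma Forall2_fm {A B C D} (R : C -> D -> Prop) (f : A -> B -> C) (g : A -> B -> D) l1 l2 :
  (forall i j, In i l1 -> In j l2 -> R (f i j) (g i j)) ->
  Forall2 R (flat_map (fun i => map (f i) l2) l1) (flat_map (fun i => map (g i) l2) l1).
Proof.
  intros H. induction l1 as [|i l1 IH]; simpl; [constructor|].
  apply Forall2_app.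
  - clear IH. assert (forall j, In j l2 -> R (f i j) (g i j)) by (intros; apply H; simpl; auto).
    clear H. induction l2; simpl; constructor; auto. apply H0; simpl; auto. apply IHl2.
    intros; apply H0; simpl; auto.
  - apply IH. intros; apply H; simpl; auto.
Qed.

Lemma sum_fm (F : nat -> nat) (G : nat -> nat -> nat) l1 l2 :
  list_sum (map F (flat_map (fun i => map (G i) l2) l1)) =
  list_sum (map (fun i => list_sum (map (fun j => F (G i j)) l2)) l1).
Proof.
  induction l1; simpl; auto. rewrite map_app, list_sum_app, IHl1, map_map. auto.
Qed.

Lemma KL_S2 M ls : Forall (fun l => (l <= M)%nat) ls -> KL ls * 2^M = INR (S2 M ls).
Proof.
  induction ls as [|l ls IH]; intros H; unfold KL, S2 in *; simpl; [lra|].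
  inversion H; subst. rewrite plus_INR, <- IH by auto.
  rewrite pow_INR. simpl INR. replace (1 + 1) with 2 by lra.
  assert (E : 2^M = 2^(M-l) * 2^l) by (rewrite <- pow_add; f_equal; lia).
  assert (E2 : (/2)^l * 2^l = 1) by (rewrite <- Rpow_mult_distr; replace (/2 * 2) with 1 by lra; apply pow1).
  rewrite E. transitivity ((/2)^l * 2^l * 2^(M-l) + sumR (map (fun l0 : nat => (/ 2) ^ l0) ls) * (2 ^ (M - l) * 2 ^ l)); [ring|].
  rewrite E2. ring.
Qed.

Lemma fold_min_ge L d r : (L <= d)%nat -> (forall x, In x r -> (L <= x)%nat) ->
  (L <= fold_right Nat.min d r)%nat.
Proof.
  intros Hd H. induction r as [|b r IHr]; simpl; auto.
  assert (L <= b)%nat by (apply H; simpl; auto).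
  assert (L <= fold_right Nat.min d r)%nat by (apply IHr; intros; apply H; simpl; auto).
  lia.
Qed.

Lemma min_list_ge L l : (forall x, In x l -> (L <= x)%nat) -> l <> [] -> (L <= min_list l)%nat.
Proof.
  intros H Hne. unfold min_list. destruct l as [|a l]; [congruence|]. simpl hd.
  apply fold_min_ge; auto. apply H; simpl; auto.
Qed.

Theorem lemma5 (k : nat) (hk : (1 <= k)%nat) :
  alpha_uniform (source_A k) 4 /\
  exists c : list (list bool),
    optimal_code (source_A k) c /\ (fringe_thickness c <= 2)%nat.
Proof.
  pose proof (q_pos k) as Hq. pose proof (q_k k hk) as Hqk.
  split.
  - split; [lra|split].
    + intros x Hx. unfold source_A in Hx. apply in_flat_map in Hx as [i [_ Hx]].
      apply in_map_iff in Hx as [j [<- _]]. apply pow_lt; auto.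
    + intros x y Hx Hy. unfold source_A in Hx, Hy.
      apply in_flat_map in Hx as [i [_ Hx]]. apply in_map_iff in Hx as [j [<- _]].
      apply in_flat_map in Hy as [i' [Hi' Hy]]. apply in_map_iff in Hy as [j' [<- Hj']].
      apply in_seq in Hi', Hj'.
      assert (qk k ^ (i + j) <= qk k ^ 0) by (apply q_mono; auto; lia).
      assert (qk k ^ (k * 2) <= qk k ^ (i' + j')) by (apply q_mono; auto; lia).
      rewrite q_dk in H0 by auto. simpl in H, H0. lra.
  - destruct (exists_params k hk) as [t [h [g [L [Ht [Hh [Hg HW]]]]]]].
    set (ls := flat_map (fun i => map (fun j => (L + dd k t h g i j)%nat) (seq 0 k)) (seq 0 k)).
    set (lam := qk k ^ t * 2^(L+1)).
    assert (Hlam : 0 < lam) by (unfold lam; apply Rmult_lt_0_compat; apply pow_lt; lra).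
    assert (HF2 : Forall2 (fun p l => lam * (/2)^(l+1) <= p <= lam * (/2)^l) (source_A k) ls).
    { unfold source_A, ls. apply Forall2_fm. intros i j Hi Hj. apply in_seq in Hi, Hj.
      apply (window k hk (i + j) t (dd k t h g i j) L); unfold dd; cmp; lia. }
    assert (Hlen : length ls = length (source_A k)) by (symmetry; eapply Forall2_length; eauto).
    assert (Hbound : Forall (fun l => (l <= L + 2)%nat) ls).
    { unfold ls. apply Forall_forall. intros x Hx. apply in_flat_map in Hx as [i [_ Hx]].
      apply in_map_iff in Hx as [j [<- _]]. pose proof (dd_le k t h g i j). lia. }
    assert (HS2 : S2 (L + 2) ls = (2^(L+2))%nat).
    { rewrite <- HW. unfold S2, ls, W, dsum. rewrite sum_fm.
      apply sum_ext. intros i _. apply sum_ext. intros j _. f_equal. lia. }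
    assert (HKL : KL ls = 1).
    { pose proof (KL_S2 _ _ Hbound). rewrite HS2, pow_INR in H. simpl INR in H.
      replace (1 + 1) with 2 in H by lra.
      assert (0 < 2 ^ (L+2)) by (apply pow_lt; lra). nra. }
    destruct (kraft_converse (L+2) ls Hbound ltac:(rewrite HS2; lia)) as [c [Hc Hpf]].
    exists c. split.
    + split.
      * rewrite <- Hlen, <- Hc, length_map. apply PF_pc; auto.
      * intros c' Hc'. rewrite !cost_costL, Hc.
        assert (Hl' : length (map (@length bool) c') = length (source_A k))
          by (rewrite length_map; apply Hc').
        pose proof (lp_bound lam _ _ Hlam HF2 _ Hl').
        assert (K c' <= 1).
        { apply (kraft (list_max (map (@length bool) c'))); [eapply pc_PF; eauto|].
          intros w Hw.
          pose proof (proj1 (list_max_le (map (@length bool) c') (list_max (map (@length bool) c'))) (le_n _)) as HFm.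
          rewrite Forall_forall in HFm. apply HFm, in_map; auto. }
        rewrite K_KL in H0. rewrite HKL in H. nra.
    + unfold fringe_thickness. rewrite Hc.
      assert (list_max ls <= L + 2)%nat by (apply (proj2 (list_max_le _ _)); auto).
      destruct (list_eq_dec Nat.eq_dec ls []) as [Els|Els]; [rewrite Els; simpl; lia|].
      assert (L <= min_list ls)%nat.
      { apply min_list_ge; [|auto]. intros x Hx. unfold ls in Hx.
        apply in_flat_map in Hx as [i [_ Hx]]. apply in_map_iff in Hx as [j [<- _]]. lia. }
      lia.
Qed.
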